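(* Let $n\in\mathbb{N}$ and let $c_k\in\mathbb{C}$, $0\le k\le\lfloor (n-1)/3\rfloor$. If $$\Pi\sum_{k=0}^{\lfloor (n-1)/3\rfloor}c_k(z+\overline z)^{n-2k}(z^2-z\overline z+\overline z^2)^k=0,$$ then $c_k=0$ for all $k$.
   Context: Let $\omega=e^{2\pi\mathrm{i}/3}$. For a polynomial $f(z,\overline z)$ in $z$ and $\overline z$ (viewed as a function of $z\in\mathbb{C}$), $\Pi f(z,\overline z):=\frac13\big(2f(z,\overline z)-f(\omega^2z,\omega\overline z)-f(\omega z,\omega^2\overline z)\big)$. *)

(* Defs.v *)
From HB Require Import structures.
From mathcomp Require Import all_boot all_order all_algebra.
From mathcomp Require Import complex.
From mathcomp Require Import Rstruct.
Set Implicit Arguments. Unset Strict Implicit. Unset Printing Implicit Defensive.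
Import Order.TTheory GRing.Theory Num.Theory.
Local Open Scope ring_scope.

Definition C : Type := complex Rdefinitions.R.

(* omega = e^{2 pi i / 3} = -1/2 + i sqrt(3)/2 *)
Definition omega : C := Complex (- (1 / 2)) (Num.sqrt 3 / 2).

(* The operator Pi acting on a polynomial f(z, zbar), given as a function
   f : C -> C -> C of (z, zbar), producing a function of z in C:
   Pi f (z) = 1/3 (2 f(z, zbar) - f(w^2 z, w zbar) - f(w z, w^2 zbar)). *)
Definition Pi (f : C -> C -> C) (z : C) : C :=
  (2 * f z (z^*) - f (omega ^+ 2 * z) (omega * z^*)
     - f (omega * z) (omega ^+ 2 * z^*)) / 3.

(* The sum  sum_{k=0}^{floor((n-1)/3)} c_k (z+zb)^(n-2k) (z^2 - z zb + zb^2)^k.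
   The number of indices, floor((n-1)/3) + 1 (with floor(-1/3) = -1 for n = 0),
   equals (n+2) %/ 3 in nat. *)
Definition nidx (n : nat) : nat := (n + 2) %/ 3.

Definition Fsum (n : nat) (c : nat -> C) (z zb : C) : C :=
  \sum_(0 <= k < nidx n) c k * (z + zb) ^+ (n - 2 * k) * (z ^+ 2 - z * zb + zb ^+ 2) ^+ k.

(* Main.v *)
Require Import Defs.
From HB Require Import structures.
From mathcomp Require Import all_boot all_order all_algebra.
From mathcomp Require Import complex.
From mathcomp Require Import Rstruct ring lra zify.
Import Order.TTheory GRing.Theory Num.Theory.
Local Open Scope ring_scope.
Definition RR := Rdefinitions.R.
Definition s3 : RR := Num.sqrt 3.
Lemma s3s : s3 * s3 = 3.
Proof. by rewrite -expr2 sqr_sqrtr // ler0n. Qed.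

Lemma conjE (x y : RR) : (Complex x y : C)^* = Complex x (-y).
Proof. by []. Qed.
Lemma mulCE (x y a b : RR) : (Complex x y : C) * Complex a b = Complex (x*a - y*b) (x*b+y*a).
Proof. by []. Qed.

Lemma omega2 : omega ^+ 2 = Complex (-(1/2)) (-(s3/2)).
Proof.
rewrite expr2 /omega mulCE; congr Complex.
  have -> : Num.sqrt 3 / 2 * (Num.sqrt 3 / 2) = s3 * s3 / 4 :> RR by rewrite /s3; field; rewrite ?pnatr_eq0.
  by rewrite s3s; field; rewrite ?pnatr_eq0.
by rewrite /s3; field; rewrite ?pnatr_eq0.
Qed.
Lemma omega3 : omega ^+ 3 = 1.
Proof.
rewrite exprS omega2 /omega mulCE; congr Complex.
  have -> : Num.sqrt 3 / 2 * - (s3 / 2) = - (s3 * s3 / 4) :> RR by rewrite /s3; field; rewrite ?pnatr_eq0.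
  by rewrite s3s; field; rewrite ?pnatr_eq0.
by rewrite /s3; field; rewrite ?pnatr_eq0.
Qed.
Lemma omegaC : omega ^* = omega ^+ 2.
Proof. by rewrite omega2 /omega conjE. Qed.
Lemma conj_o2 (z : C) : (omega ^+ 2 * z)^* = omega * z^*.
Proof.
case: z => x y; rewrite omega2 /omega !mulCE !conjE; congr Complex; rewrite /s3; ring.
Qed.
Lemma conj_o1 (z : C) : (omega * z)^* = omega^+2 * z^*.
Proof.
case: z => x y; rewrite omega2 /omega !mulCE !conjE; congr Complex; rewrite /s3; ring.
Qed.
Lemma invariance (n : nat) (c : nat -> C) :
  (forall z : C, Pi (Fsum n c) z = 0) ->
  forall z, Fsum n c (omega * z) (omega * z)^* = Fsum n c z z^* /\
            Fsum n c (omega^+2 * z) (omega^+2 * z)^* = Fsum n c z z^*.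
Proof.
move=> H.
set h := fun z => Fsum n c z z^*.
have E : forall z, 2 * h z - h (omega^+2 * z) - h (omega * z) = 0.
  move=> z; have := H z; rewrite /Pi /h.
  rewrite conj_o2 conj_o1.
  move/eqP; rewrite mulf_eq0 invr_eq0 pnatr_eq0 orbF => /eqP ->; done.
have key : forall z, h (omega * z) = h z.
  move=> z; have E1 := E z; have E2 := E (omega * z).
  rewrite mulrA -exprSr omega3 mul1r mulrA -expr2 in E2.
  have : 3 * (h z - h (omega * z)) = 0.
    rewrite -[LHS]subr0 -{2}E1 -[X in _ - X = _]subr0 -{2}E2. ring.
  move/eqP; rewrite mulf_eq0 pnatr_eq0 /= subr_eq0 => /eqP ->; done.
move=> z; split; first exact: key.
have K1 := key (omega * z); have K2 := key z; rewrite /h in K1 K2.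
by rewrite expr2 -mulrA K1 K2.
Qed.
Lemma addCE (x y a b : RR) : (Complex x y : C) + Complex a b = Complex (x+a) (y+b).
Proof. by []. Qed.
Lemma subCE (x y a b : RR) : (Complex x y : C) - Complex a b = Complex (x-a) (y-b).
Proof. by []. Qed.

Lemma Fsum_cplx n c (x y : RR) : Fsum n c (Complex x y) (Complex x y)^* =
  \sum_(0 <= k < nidx n) c k * ((2*x)%:C)%C ^+ (n - 2*k) * ((x^+2 - 3*y^+2)%:C)%C ^+ k.
Proof.
rewrite /Fsum; apply eq_bigr => k _; rewrite conjE.
congr (_ * _ ^+ _ * _ ^+ _).
  by rewrite -complexr0 addCE; congr Complex; ring.
by rewrite -complexr0 !expr2 !mulCE subCE addCE; congr Complex; ring.
Qed.

Definition Pn n (c : nat -> C) (U V : {poly C}) : {poly C} :=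
  \sum_(0 <= k < nidx n) (c k)%:P * U ^+ (n - 2*k) * V ^+ k.

Lemma hornerPn n c U V x : (Pn n c U V).[x] =
  \sum_(0 <= k < nidx n) c k * U.[x] ^+ (n - 2*k) * V.[x] ^+ k.
Proof. by rewrite /Pn horner_sum; apply eq_bigr => k _; rewrite !hornerE. Qed.

Lemma poly_eq_real (p : {poly C}) : (forall a : RR, p.[(a%:C)%C] = 0) -> p = 0.
Proof.
move=> H; apply: (@roots_geq_poly_eq0 _ _ [seq (i%:R : C) | i <- iota 0 (size p)]).
- apply/allP => x /mapP [i _ ->]; rewrite /root; have := H i%:R; rewrite rmorph_nat => ->; done.
- by rewrite map_inj_uniq ?iota_uniq // => i j /eqP; rewrite eqr_nat => /eqP.
- by rewrite size_map size_iota.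
Qed.
Definition X0 : {poly C} := 'X - 0%:P.
Definition Xp : {poly C} := 'X - (-3)%:P.
Definition Xm : {poly C} := 'X - 3%:P.
Definition U0 := 2%:P * X0.
Definition V0 := Xm * Xp.
Definition U1 := - Xp.
Definition V1 := (-2)%:P * X0 * Xm.
Definition U2 := - Xm.
Definition V2 := (-2)%:P * X0 * Xp.

Ltac pushC := rewrite /X0 /Xp /Xm !hornerE ?(rmorphN, rmorphB, rmorphD, rmorphM, rmorphXn, rmorph_nat); ring.

Lemma pt0 n c (a : RR) : Fsum n c (Complex a s3) (Complex a s3)^* = (Pn n c U0 V0).[(a%:C)%C].
Proof.
rewrite Fsum_cplx hornerPn; apply eq_bigr => k _.
have -> : a^+2 - 3 * s3^+2 = (a - 3) * (a + 3) :> RR by rewrite [s3^+2]expr2 s3s; ring.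
congr (_ * _ ^+ _ * _ ^+ _); rewrite /U0 /V0; pushC.
Qed.

Lemma pt1 n c (a : RR) : Fsum n c (omega * Complex a s3) (omega * Complex a s3)^* = (Pn n c U1 V1).[(a%:C)%C].
Proof.
have -> : omega * Complex a s3 = Complex (-(a+3)/2) (s3*(a-1)/2).
  rewrite /omega mulCE; congr Complex.
    have -> : Num.sqrt 3 / 2 * s3 = s3 * s3 / 2 :> RR by rewrite /s3; field; rewrite ?pnatr_eq0.
    by rewrite s3s; field; rewrite ?pnatr_eq0.
  by rewrite /s3; field; rewrite ?pnatr_eq0.
rewrite Fsum_cplx hornerPn; apply eq_bigr => k _.
have -> : 2 * (-(a+3)/2) = -(a+3) :> RR by field; rewrite ?pnatr_eq0.
have -> : (-(a+3)/2)^+2 - 3 * (s3*(a-1)/2)^+2 = -2 * a * (a-3) :> RR.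
  have -> : (s3*(a-1)/2)^+2 = s3*s3*((a-1)/2)^+2 by field; rewrite ?pnatr_eq0.
  by rewrite s3s; field; rewrite ?pnatr_eq0.
congr (_ * _ ^+ _ * _ ^+ _); rewrite /U1 /V1; pushC.
Qed.

Lemma pt2 n c (a : RR) : Fsum n c (omega^+2 * Complex a s3) (omega^+2 * Complex a s3)^* = (Pn n c U2 V2).[(a%:C)%C].
Proof.
have -> : omega^+2 * Complex a s3 = Complex ((3-a)/2) (-(s3*(a+1))/2).
  rewrite omega2 mulCE; congr Complex.
    have -> : - (s3 / 2) * s3 = - (s3 * s3 / 2) :> RR by field; rewrite ?pnatr_eq0.
    by rewrite s3s; field; rewrite ?pnatr_eq0.
  by field; rewrite ?pnatr_eq0.
rewrite Fsum_cplx hornerPn; apply eq_bigr => k _.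
have -> : 2 * ((3-a)/2) = 3 - a :> RR by field; rewrite ?pnatr_eq0.
have -> : ((3-a)/2)^+2 - 3 * (-(s3*(a+1))/2)^+2 = -2 * a * (a+3) :> RR.
  have -> : (-(s3*(a+1))/2)^+2 = s3*s3*((a+1)/2)^+2 by field; rewrite ?pnatr_eq0.
  by rewrite s3s; field; rewrite ?pnatr_eq0.
congr (_ * _ ^+ _ * _ ^+ _); rewrite /U2 /V2; pushC.
Qed.

Lemma dvdPn n c U V (d : {poly C}) m :
  (forall j, (j < nidx n)%N -> c j != 0 -> (m <= n - 2*j)%N) -> d %| U -> d^+m %| Pn n c U V.
Proof.
move=> hm hd; rewrite /Pn big_nat_cond; apply: (big_ind (fun p => d^+m %| p)).
- exact: dvdp0.
- by move=> p q hp hq; rewrite dvdp_add.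
move=> j /andP[/andP[_ hj] _]; have [->|cj] := eqVneq (c j) 0.
  by rewrite polyC0 !mul0r dvdp0.
apply: dvdp_mulr; apply: dvdp_mull.
exact: dvdp_trans (dvdp_exp2r m hd) (dvdp_exp2l _ (hm j hj cj)).
Qed.

Lemma szM (p q : {poly C}) a b : (size p <= a.+1)%N -> (size q <= b.+1)%N -> (size (p*q)%R <= (a+b).+1)%N.
Proof. move=> hp hq; have := size_polyMleq p q; lia. Qed.

Lemma szX (p : {poly C}) a k : (size p <= a.+1)%N -> (size (p^+k)%R <= (a*k).+1)%N.
Proof. move=> hp; have := size_poly_exp_leq p k; nia. Qed.

Arguments szM {p q a b}.
Arguments szX {p a} k.

Lemma size_q0 n c : (size (Pn n c U0 V0) <= n.+1)%N.
Proof.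
rewrite /Pn big_nat_cond; apply: (big_ind (fun p : {poly C} => (size p <= n.+1)%N)).
- by rewrite size_poly0.
- by move=> p q hp hq; apply: leq_trans (size_add _ _) _; rewrite geq_max hp hq.
move=> j /andP[/andP[_ hj] _].
have h2 : (2 * j <= n)%N by move: hj; rewrite /nidx; lia.
have hU : (size U0 <= 1.+1)%N.
  have e0 : (size X0 <= 1.+1)%N by rewrite /X0 size_XsubC.
  exact: szM (size_polyC_leq1 2) e0.
have hV : (size V0 <= 2.+1)%N.
  have e1 : (size Xm <= 1.+1)%N by rewrite /Xm size_XsubC.
  have e2 : (size Xp <= 1.+1)%N by rewrite /Xp size_XsubC.
  exact: szM e1 e2.
have := szM (szM (size_polyC_leq1 (c j)) (szX (n - 2*j) hU)) (szX j hV).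
move/leq_trans; apply; lia.
Qed.

Theorem proposition21 (n : nat) (c : nat -> C) :
  (forall z : C, Pi (Fsum n c) z = 0) ->
  forall k : nat, (k < nidx n)%N -> c k = 0.
Proof.
move=> H k hk; apply/eqP/negPn/negP => ck.
have E1 : Pn n c U0 V0 = Pn n c U1 V1.
  apply/eqP; rewrite -subr_eq0; apply/eqP/poly_eq_real => a.
  by rewrite hornerD hornerN -pt0 -pt1 (invariance n c H _).1 subrr.
have E2 : Pn n c U0 V0 = Pn n c U2 V2.
  apply/eqP; rewrite -subr_eq0; apply/eqP/poly_eq_real => a.
  by rewrite hornerD hornerN -pt0 -pt2 (invariance n c H _).2 subrr.
have exP : exists j, (j < nidx n)%N && (c j != 0) by exists k; rewrite hk ck.
have ubP : forall j, (j < nidx n)%N && (c j != 0) -> (j <= nidx n)%N.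
  by move=> j /andP[/ltnW].
case: (ex_maxnP exP ubP) => K /andP[hK cK] hmax.
set m := (n - 2*K)%N.
have h3 : (3*K < n)%N by move: hK; rewrite /nidx; lia.
have hm : forall j, (j < nidx n)%N -> c j != 0 -> (m <= n - 2*j)%N.
  move=> j hj cj; have := hmax j; rewrite hj cj => /(_ isT); rewrite /m; lia.
set q := Pn n c U0 V0.
have d0 : X0^+m %| q by apply: dvdPn hm _; rewrite /U0 dvdp_mull.
have d1 : Xp^+m %| q by rewrite /q E1; apply: dvdPn hm _; rewrite /U1 dvdpNr.
have d2 : Xm^+m %| q by rewrite /q E2; apply: dvdPn hm _; rewrite /U2 dvdpNr.
have c01 : coprimep X0 Xp by apply: coprimep_XsubC2; rewrite subr0 oppr_eq0 pnatr_eq0.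
have c02 : coprimep X0 Xm by apply: coprimep_XsubC2; rewrite subr0 pnatr_eq0.
have c12 : coprimep Xp Xm by apply: coprimep_XsubC2; rewrite opprK -natrD pnatr_eq0.
have dD : X0^+m * Xp^+m * Xm^+m %| q.
  have cA : coprimep (X0^+m * Xp^+m) (Xm^+m).
    by rewrite coprimepMl; apply/andP; split; apply/coprimep_expl/coprimep_expr.
  have cB : coprimep (X0^+m) (Xp^+m) by apply/coprimep_expl/coprimep_expr.
  by rewrite (Gauss_dvdp _ cA) (Gauss_dvdp _ cB) d0 d1 d2.
set r := \sum_(0 <= j < nidx n) (c j)%:P * (2%:P)^+(n - 2*j) * X0^+(n - 2*j - m) * V0^+j.
have qr : q = X0^+m * r.
  rewrite /q /Pn /r big_distrr /=; apply: eq_big_nat => j /andP[_ hj].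
  have [->|cj] := eqVneq (c j) 0; first by rewrite polyC0 !mul0r mulr0.
  rewrite /U0 exprMn.
  rewrite [X0 ^+ (n - 2*j)](_ : _ = X0^+(n-2*j-m) * X0^+m); last by rewrite -exprD subnK // hm.
  ring.
have r0 : r.[0] != 0.
  have -> : r.[0] = c K * 2^+(n - 2*K) * V0.[0]^+K.
    rewrite /r horner_sum.
    rewrite (eq_big_nat _ _ (F2 := fun j => if j == K then c K * 2^+(n - 2*K) * V0.[0]^+K else 0)).
      by rewrite -big_mkcond big_nat1_eq hK.
    move=> j /andP[_ hj]; rewrite !hornerE.
    have [->|jK] := eqVneq j K; first by rewrite /m subnn expr0 mulr1.
    have [->|cj] := eqVneq (c j) 0; first by rewrite !mul0r.
    have hjK : (j < K)%N by have := hmax j; rewrite hj cj => /(_ isT); rewrite leq_eqVlt (negbTE jK).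
    rewrite oppr0 expr0n /=.
    have -> : (n - 2*j - m == 0)%N = false by apply/eqP; rewrite /m; lia.
    by rewrite mulr0 mul0r.
  rewrite !mulf_neq0 ?expf_neq0 ?pnatr_eq0 //.
  by rewrite /V0 /Xm /Xp hornerM !hornerXsubC !sub0r opprK mulf_neq0 ?oppr_eq0 ?pnatr_eq0.
have rn0 : r != 0 by apply: contraNneq r0 => ->; rewrite horner0.
have qn0 : q != 0 by rewrite qr mulf_neq0 // expf_neq0 // polyXsubC_eq0.
have := dvdp_leq qn0 dD.
rewrite !size_mul ?mulf_neq0 ?expf_neq0 ?polyXsubC_eq0 // /X0 /Xp /Xm !size_exp_XsubC.
move/leq_trans => /(_ _ (size_q0 n c)); rewrite /m; lia.
Qed.
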